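(* Let $r\in(0,1]^K$ and fix an action $a\in[K]$. Let $\theta_1\in\mathbb{R}^K$ and $\eta>0$, and define the sequence $\theta_{t+1} = \theta_t + \eta(\hat r_t - \hat b_t)$ where the sampled action is fixed to $a_t = a$ for all $t\ge1$, $\hat r_t(i) = \frac{\mathbb{I}\{a_t=i\}}{\pi_{\theta_t}(i)}r(i)$ and $\hat b_t(i) = \left(\frac{\mathbb{I}\{a_t=i\}}{\pi_{\theta_t}(i)}-1\right)\pi_{\theta_t}^\top r$ for $i\in[K]$. Then $1-\pi_{\theta_t}(a)\in\Omega(1/t)$, i.e. there is a constant $C>0$ with $1-\pi_{\theta_t}(a)\ge C/t$ for all sufficiently large $t$.
   Context: $\pi_\theta(i) = e^{\theta(i)}/\sum_{i'\in[K]}e^{\theta(i')}$ is the softmax policy on $[K]=\{1,\dots,K\}$, $K\ge2$. *)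

(* Defs.v *)
From mathcomp Require Import all_boot all_order all_algebra.
From mathcomp Require Import all_classical all_reals all_analysis.
Set Implicit Arguments. Unset Strict Implicit. Unset Printing Implicit Defensive.
Import Order.TTheory GRing.Theory Num.Theory.
Local Open Scope ring_scope.

Definition softmax (R : realType) (K : nat) (th : 'I_K -> R) (i : 'I_K) : R :=
  expR (th i) / \sum_(j < K) expR (th j).

Definition expected_reward (R : realType) (K : nat) (th r : 'I_K -> R) : R :=
  \sum_(j < K) softmax th j * r j.

Definition rhat (R : realType) (K : nat) (r th : 'I_K -> R) (a i : 'I_K) : R :=
  (if a == i then 1 else 0) / softmax th i * r i.

Definition bhat (R : realType) (K : nat) (r th : 'I_K -> R) (a i : 'I_K) : R :=
  ((if a == i then 1 else 0) / softmax th i - 1) * expected_reward th r.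

Definition pg_step (R : realType) (K : nat) (eta : R) (r : 'I_K -> R) (a : 'I_K)
  (th : 'I_K -> R) : 'I_K -> R :=
  fun i => th i + eta * (rhat r th a i - bhat r th a i).

(* pg_iter n = theta_{n+1}; pg_iter 0 = theta_1 *)
Fixpoint pg_iter (R : realType) (K : nat) (eta : R) (r : 'I_K -> R) (a : 'I_K)
  (th1 : 'I_K -> R) (n : nat) : 'I_K -> R :=
  match n with
  | 0 => th1
  | n'.+1 => pg_step eta r a (pg_iter eta r a th1 n')
  end.

(* Main.v *)
Require Import Defs.
From mathcomp Require Import all_boot all_order all_algebra.
From mathcomp Require Import all_classical all_reals all_analysis.
From mathcomp Require Import ring lra.
Import Order.TTheory GRing.Theory Num.Theory.
Set Implicit Arguments. Unset Strict Implicit.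
Local Open Scope ring_scope.

Lemma exp_le12 (R : realType) (u : R) : 0 <= u -> u <= 1/2 -> expR u <= 1 + 2 * u.
Proof.
move=> u0 u1.
have h1 := expR_ge1Dx (- u).
have h2 : expR u * expR (- u) = 1 by rewrite -expRD subrr expR0.
have hp := expR_gt0 u.
have hq := expR_gt0 (- u).
nra.
Qed.

Lemma seq_bound (R : realType) (X : nat -> R) (k : R) : 0 <= k ->
  (forall t, 0 < X t) ->
  (forall t, X t.+1 <= X t * expR (k / X t)) ->
  (forall t, 0 < k -> X 0%N <= X t) ->
  forall t, X t <= X 0%N + 2 * k * expR (k / X 0%N) + 2 * k * t%:R.
Proof.
move=> k0 Xp Xs Xm.
have e0 := expR_gt0 (k / X 0%N).
elim=> [|t IH].
  rewrite mulr0 addr0; nra.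
have ht : (t.+1)%:R = t%:R + 1 :> R by rewrite -addn1 natrD.
rewrite ht mulrDr mulr1.
have := Xs t; have := Xp t => xp xs.
case: (leP (2 * k) (X t)) => hx.
- have u0 : 0 <= k / X t by rewrite divr_ge0 // ltW.
  have u1 : k / X t <= 1/2.
    rewrite ler_pdivrMr //; lra.
  have he := exp_le12 u0 u1.
  have : X t * expR (k / X t) <= X t * (1 + 2 * (k / X t)).
    by rewrite ler_pM2l.
  have -> : X t * (1 + 2 * (k / X t)) = X t + 2 * k.
    by field; rewrite gt_eqF.
  lra.
- have kp : 0 < k by lra.
  have := Xm t kp => hm.
  have : k / X t <= k / X 0%N.
    by rewrite ler_pM2l // lef_pV2 // posrE.
  rewrite -ler_expR => he.
  have : X t * expR (k / X t) <= 2 * k * expR (k / X 0%N).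
    have := expR_gt0 (k / X t); nra.
  have : 0 <= X 0%N + 2 * k * t%:R.
    have : (0:R) <= t%:R by rewrite ler0n.
    have := Xp 0%N; nra.
  lra.
Qed.

Definition Sof (R : realType) (K : nat) (th : 'I_K -> R) (a : 'I_K) : R :=
  \sum_(j < K | j != a) expR (th j).
Definition Nof (R : realType) (K : nat) (r th : 'I_K -> R) (a : 'I_K) : R :=
  \sum_(j < K | j != a) expR (th j) * (r a - r j).

Lemma sum_split (R : realType) (K : nat) (th : 'I_K -> R) (a : 'I_K) :
  \sum_(j < K) expR (th j) = expR (th a) + Sof th a.
Proof. by rewrite (bigD1 a). Qed.

Lemma Z_gt0 (R : realType) (K : nat) (th : 'I_K -> R) (a : 'I_K) :
  0 < \sum_(j < K) expR (th j).
Proof.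
rewrite (sum_split _ a).
have : 0 <= Sof th a by apply: sumr_ge0 => j _; apply: ltW; apply: expR_gt0.
have := expR_gt0 (th a); lra.
Qed.

Lemma Eform (R : realType) (K : nat) (r th : 'I_K -> R) (a : 'I_K) :
  r a - expected_reward th r = Nof r th a / \sum_(j < K) expR (th j).
Proof.
have Zp := Z_gt0 th a.
set Z := \sum_(j < K) expR (th j).
have -> : expected_reward th r = (\sum_(j < K) expR (th j) * r j) / Z.
  rewrite /expected_reward mulr_suml; apply: eq_bigr => j _.
  by rewrite /softmax -/Z; field; rewrite gt_eqF.
have -> : Nof r th a = \sum_(j < K) expR (th j) * (r a - r j).
  by rewrite (bigD1 a) //= subrr mulr0 add0r.
have -> : \sum_(j < K) expR (th j) * (r a - r j) = r a * Z - \sum_(j < K) expR (th j) * r j.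
  rewrite /Z mulr_sumr -sumrB; apply: eq_bigr => j _; ring.
by field; rewrite gt_eqF.
Qed.

Lemma step_other (R : realType) (K : nat) (eta : R) (r : 'I_K -> R) (a : 'I_K)
  (th : 'I_K -> R) j : j != a ->
  pg_step eta r a th j = th j + eta * expected_reward th r.
Proof.
move=> ja; rewrite /pg_step /rhat /bhat eq_sym (negbTE ja).
rewrite !mul0r; ring.
Qed.

Lemma step_a (R : realType) (K : nat) (eta : R) (r : 'I_K -> R) (a : 'I_K)
  (th : 'I_K -> R) :
  pg_step eta r a th a = th a + eta * expected_reward th r + eta * (Nof r th a / expR (th a)).
Proof.
have Zp := Z_gt0 th a.
have Ap := expR_gt0 (th a).
have -> : Nof r th a / expR (th a) = (r a - expected_reward th r) / softmax th a.
  rewrite Eform /softmax; field; rewrite !gt_eqF //.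
rewrite /pg_step /rhat /bhat eqxx; ring.
Qed.

Lemma S_step (R : realType) (K : nat) (eta : R) (r : 'I_K -> R) (a : 'I_K)
  (th : 'I_K -> R) :
  Sof (pg_step eta r a th) a = expR (eta * expected_reward th r) * Sof th a.
Proof.
rewrite /Sof mulr_sumr; apply: eq_bigr => j ja.
by rewrite step_other // expRD mulrC.
Qed.

Lemma N_step (R : realType) (K : nat) (eta : R) (r : 'I_K -> R) (a : 'I_K)
  (th : 'I_K -> R) :
  Nof r (pg_step eta r a th) a = expR (eta * expected_reward th r) * Nof r th a.
Proof.
rewrite /Nof mulr_sumr; apply: eq_bigr => j ja.
rewrite step_other // expRD; ring.
Qed.

Lemma S_gt0 (R : realType) (K : nat) (hK : (2 <= K)%N) (th : 'I_K -> R) (a : 'I_K) :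
  0 < Sof th a.
Proof.
have h0 : (0 < K)%N by apply: leq_trans hK.
have h1 : (1 < K)%N by [].
have [j ja] : exists j : 'I_K, j != a.
  case: (eqVneq a (Ordinal h0)) => [->|ne].
    by exists (Ordinal h1); rewrite -val_eqE.
  by exists (Ordinal h0); rewrite eq_sym.
rewrite /Sof (bigD1 j) //=.
have : 0 <= \sum_(i < K | (i != a) && (i != j)) expR (th i).
  by apply: sumr_ge0 => i _; apply: ltW; apply: expR_gt0.
have := expR_gt0 (th j); lra.
Qed.

Definition Xof (R : realType) (K : nat) (th : 'I_K -> R) (a : 'I_K) : R :=
  expR (th a) / Sof th a.
Definition Dof (R : realType) (K : nat) (r th : 'I_K -> R) (a : 'I_K) : R :=
  Nof r th a / Sof th a.

Lemma D_step (R : realType) (K : nat) (hK : (2 <= K)%N) (eta : R) (r : 'I_K -> R) (a : 'I_K)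
  (th : 'I_K -> R) : Dof r (pg_step eta r a th) a = Dof r th a.
Proof.
rewrite /Dof S_step N_step.
have := S_gt0 hK th a; have := expR_gt0 (eta * expected_reward th r) => h1 h2.
field; rewrite !gt_eqF //.
Qed.

Lemma X_step (R : realType) (K : nat) (hK : (2 <= K)%N) (eta : R) (r : 'I_K -> R) (a : 'I_K)
  (th : 'I_K -> R) : Xof (pg_step eta r a th) a =
   Xof th a * expR (eta * Dof r th a / Xof th a).
Proof.
rewrite /Xof /Dof S_step step_a !expRD.
have := S_gt0 hK th a; have := expR_gt0 (eta * expected_reward th r);
have := expR_gt0 (th a) => h0 h1 h2.
have -> : eta * (Nof r th a / Sof th a) / (expR (th a) / Sof th a) =
   eta * (Nof r th a / expR (th a)).
  field; rewrite !gt_eqF //.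
field; rewrite !gt_eqF //.
Qed.

Lemma final_ineq (R : realType) (B k x tR : R) : 0 < B -> 0 <= k -> 0 < x -> 0 <= tR ->
  x <= B + 2 * k * tR -> 1 / (1 + B + 2 * k) / (tR + 1) <= 1 / (1 + x).
Proof.
move=> B0 k0 x0 t0 hx.
have -> : 1 / (1 + B + 2 * k) / (tR + 1) = 1 / ((1 + B + 2 * k) * (tR + 1)).
  field; apply/andP; split; rewrite gt_eqF //; lra.
rewrite !div1r lef_pV2 ?posrE; [|nra|lra].
nra.
Qed.

Lemma one_sub_softmax (R : realType) (K : nat) (hK : (2 <= K)%N) (th : 'I_K -> R) (a : 'I_K) :
  1 - softmax th a = 1 / (1 + Xof th a).
Proof.
rewrite /softmax /Xof (sum_split _ a).
have := S_gt0 hK th a; have := expR_gt0 (th a) => h0 h1.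
field; rewrite !gt_eqF //; lra.
Qed.

Theorem lemma8 (R : realType) (K : nat) (hK : (2 <= K)%N)
  (r : 'I_K -> R) (hr : forall i, 0 < r i <= 1) (a : 'I_K)
  (th1 : 'I_K -> R) (eta : R) (heta : 0 < eta) :
  exists C : R, 0 < C /\
    exists T : nat, forall t : nat, (T <= t)%N ->
      C / (t.+1)%:R <= 1 - softmax (pg_iter eta r a th1 t) a.
Proof.
pose X t := Xof (pg_iter eta r a th1 t) a.
pose c := eta * Dof r th1 a.
have Dt : forall t, Dof r (pg_iter eta r a th1 t) a = Dof r th1 a.
  by elim=> [//|t IH] /=; rewrite D_step.
have Xrec : forall t, X t.+1 = X t * expR (c / X t).
  by move=> t; rewrite /X /= X_step // Dt.
have Xp : forall t, 0 < X t.
  move=> t; rewrite /X /Xof; apply: divr_gt0; [exact: expR_gt0|exact: S_gt0].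
pose k := if 0 < c then c else 0.
have k0 : 0 <= k by rewrite /k; case: ifP => // /ltW.
have Xs : forall t, X t.+1 <= X t * expR (k / X t).
  move=> t; rewrite Xrec /k; case: ifP => // cp.
  rewrite ler_pM2l // ler_expR mul0r ler_pdivrMr // mul0r.
  by rewrite leNgt cp.
have Xm : forall t, 0 < k -> X 0%N <= X t.
  move=> t kp; have cp : 0 < c by move: kp; rewrite /k; case: ifP; rewrite ?ltxx.
  elim: t => [//|t IH]; rewrite Xrec; apply: (le_trans IH).
  rewrite ler_peMr ?(ltW (Xp t)) //; have := expR_ge1Dx (c / X t); have : 0 <= c / X t by apply: divr_ge0; [exact: ltW|exact: ltW].
  move=> h1 h2; lra.
have Hb := seq_bound k0 Xp Xs Xm.
set B := X 0%N + 2 * k * expR (k / X 0%N) in Hb.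
have B0 : 0 < B.
  have := Xp 0%N; have := expR_gt0 (k / X 0%N); rewrite /B; nra.
exists (1 / (1 + B + 2 * k)); split.
  apply: divr_gt0; lra.
exists 0%N => t _.
rewrite one_sub_softmax //.
have -> : (t.+1)%:R = t%:R + 1 :> R by rewrite -addn1 natrD.
exact: (final_ineq B0 k0 (Xp t) (ler0n _ t) (Hb t)).
Qed.
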